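(* Let $V_{0,0}$ be a linear subspace of $V_0$ and for $\mu\in\{1,\dots,d\}$ let $V_{0,\mu}=\{\gamma=(\gamma^\nu)_{\nu=1}^d\in V:\gamma^\mu\in V_{0,0},\ \gamma^\nu=0\text{ for }\nu\ne\mu\}$. Let $f\in C^2(V,M_N(\mathbb{C}))$ and suppose that for every $x\in V$ and every $\mu\in\{1,\dots,d\}$ there exist $K^V_{\mu\mu}(x;\cdot,\cdot)\in L_2([0,1]\times[0,1],M_N(\mathbb{C}))$ and $K^L_{\mu\mu}(x;\cdot)\in L_\infty([0,1],M_N(\mathbb{C}))$ such that for all $u,v\in V_{0,\mu}$ (identified with their $\mu$-th components, which are functions on $[0,1]$) $$\langle f''_{V_{0,\mu}V_{0,\mu}}(x)u,v\rangle=\int_0^1\!\!\int_0^1K^V_{\mu\mu}(x;s,t)u(t)v(s)\,dt\,ds+\int_0^1K^L_{\mu\mu}(x;t)u(t)v(t)\,dt,$$ where $f''_{V_{0,\mu}V_{0,\mu}}$ denotes the second partial derivative of $f$ along $V_{0,\mu}$. If $\{e_n\}$ is a weakly uniformly dense orthonormal basis of $L_2([0,1],\mathbb{R})$ with $e_n\in V_{0,0}$ for all $n$, then $f\in\mathrm{Dom}\,\Delta^{\{e_n\},1}_L$ and for all $x\in V$ $$\Delta^{\{e_n\},1}_{L}f(x)=\sum_{\mu=1}^d\int_0^1K^L_{\mu\mu}(x;t)\,dt.$$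
   Context: Let $V_0$ be a real locally convex space continuously and densely embedded in $L_2([0,1],\mathbb{R})$, let $\{p_1,\dots,p_d\}$ be an orthonormal basis of $\mathbb{R}^d$, and let $V=\mathbb{R}^d\otimes_\pi V_0$, whose elements are written $\gamma=(\gamma^\nu)_{\nu=1}^d$ with $\gamma^\nu\in V_0$. $M_N(\mathbb{C})$ is the space of complex $N\times N$ matrices; $C^2(V,M_N(\mathbb{C}))$ is the space of twice Fréchet differentiable $M_N(\mathbb{C})$-valued functions on $V$, and $\langle f''(x)u,v\rangle\in M_N(\mathbb{C})$ denotes the second derivative at $x$ evaluated on $(u,v)$. For an orthonormal basis $\{e_n\}$ of $L_2([0,1],\mathbb{R})$ with $e_n\in V_0$, the (classical) Lévy Laplacian is $$\Delta^{\{e_n\},1}_{L}f(x)=\lim_{n\to\infty}\frac1n\sum_{k=1}^n\sum_{\mu=1}^d\langle f''(x)p_\mu e_k,p_\mu e_k\rangle,$$ with domain the set of $f\in C^2(V,M_N(\mathbb{C}))$ for which the limit exists for all $x\in V$. An orthonormal basis $\{e_n\}$ of $L_2([0,1],\mathbb{R})$ is weakly uniformly dense if $\lim_{n\to\infty}\int_0^1h(t)\big(\frac1n\sum_{k=1}^ne_k(t)^2-1\big)dt=0$ for every $h\in L_\infty([0,1],\mathbb{R})$. *)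

(* Defs.v *)
From HB Require Import structures.
From mathcomp Require Import all_boot all_order all_algebra.
From mathcomp Require Import all_classical all_reals all_analysis.

Set Implicit Arguments.
Unset Strict Implicit.
Unset Printing Implicit Defensive.
Import Order.TTheory GRing.Theory Num.Theory.
Import numFieldNormedType.Exports.
Local Open Scope classical_set_scope.
Local Open Scope ring_scope.

Section LevyDefs.
Variable R : realType.

Notation leb := (@lebesgue_measure R).

Definition I01 : set R := [set t | 0 <= t <= 1].

Definition L2fun (g : R -> R) : Prop :=
  measurable_fun I01 g /\ leb.-integrable I01 (fun t => (g t ^+ 2)%:E).

Definition Linffun (g : R -> R) : Prop :=
  measurable_fun I01 g /\
  exists M : R, {ae leb, forall t, I01 t -> `|g t| <= M}.

Definition L2fun2 (K : R -> R -> R) : Prop :=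
  measurable_fun (I01 `*` I01) (fun p : R * R => K p.1 p.2) /\
  (leb \x leb)%E.-integrable (I01 `*` I01)
     (fun p : R * R => (K p.1 p.2 ^+ 2)%:E).

(** M_N(C) is represented (as a finite-dimensional real normed space) by
    real (N+N) x N block matrices  col_mx (Re A) (Im A). *)
Local Notation MC N := 'M[R]_(N + N, N).

Definition reE N (A : MC N) (i j : 'I_N) : R := usubmx A i j.
Definition imE N (A : MC N) (i j : 'I_N) : R := dsubmx A i j.

Definition MCint N (F : R -> MC N) : MC N :=
  col_mx (\matrix_(i, j) Rintegral leb I01 (fun t => reE (F t) i j))
         (\matrix_(i, j) Rintegral leb I01 (fun t => imE (F t) i j)).

Definition MCint2 N (F : R -> R -> MC N) : MC N :=
  MCint (fun s => MCint (fun t => F s t)).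

Definition L2MC2 N (K : R -> R -> MC N) : Prop :=
  forall i j, L2fun2 (fun s t => reE (K s t) i j) /\
              L2fun2 (fun s t => imE (K s t) i j).

Definition LinfMC N (K : R -> MC N) : Prop :=
  forall i j, Linffun (fun t => reE (K t) i j) /\
              Linffun (fun t => imE (K t) i j).

(** V_0 is a real locally convex space (tvsType) continuously, densely
    (and injectively) embedded in L_2([0,1],R) via iota. *)
Definition L2_embedding (V0 : tvsType R) (iota : V0 -> R -> R) : Prop :=
  [/\ (forall (a : R) (u v : V0) t,
          iota (a *: u + v) t = a * iota u t + iota v t),
      (forall v, L2fun (iota v)),
      (forall v, {ae leb, forall t, I01 t -> iota v t = 0} -> v = 0),
      (forall eps : R, 0 < eps ->
          \forall v \near (0 : V0),
             Rintegral leb I01 (fun t => iota v t ^+ 2) < eps) &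
      (forall g, L2fun g -> forall eps : R, 0 < eps ->
          exists v : V0,
            Rintegral leb I01 (fun t => (iota v t - g t) ^+ 2) < eps)].

Definition linear_subspace (V0 : lmodType R) (S : set V0) : Prop :=
  S 0 /\ (forall (a : R) u v, S u -> S v -> S (a *: u + v)).

(** V = R^d (x)_pi V_0, written in coordinates w.r.t. the orthonormal
    basis {p_1,...,p_d}:  gamma = (gamma^nu)_nu. *)
Local Notation Vsp d V0 := ('I_d -> GRing.Lmodule.sort V0)%type.

Definition ptens (d : nat) (V0 : tvsType R) (mu : 'I_d) (g : V0) : Vsp d V0 :=
  fun nu => if nu == mu then g else 0.

Definition V0mu (d : nat) (V0 : tvsType R) (V00 : set V0) (mu : 'I_d)
  : set (Vsp d V0) :=
  [set gam | V00 (gam mu) /\ forall nu, nu != mu -> gam nu = 0].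

Definition dderiv (X : lmodType R) (W : normedModType R) (F : X -> W)
    (x u : X) : W :=
  derive1 (fun h : R => F (x + h *: u)) 0.

(** <f''(x) u, v> as the iterated directional derivative D_u D_v f (x) *)
Definition D2 (X : lmodType R) (W : normedModType R) (F : X -> W)
    (x u v : X) : W :=
  dderiv (fun y => dderiv F y v) x u.

Definition C2 (X : lmodType R) (W : normedModType R) (F : X -> W) : Prop :=
  [/\ (forall x v, derivable (fun h : R => F (x + h *: v)) 0 1),
      (forall x u v, derivable (fun h : R => dderiv F (x + h *: u) v) 0 1),
      (forall x (a : R) u1 u2 v,
          D2 F x (a *: u1 + u2) v = a *: D2 F x u1 v + D2 F x u2 v) &
      (forall x (a : R) u v1 v2,
          D2 F x u (a *: v1 + v2) = a *: D2 F x u v1 + D2 F x u v2)].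

Definition ONB_L2 (V0 : tvsType R) (iota : V0 -> R -> R) (e : nat -> V0)
  : Prop :=
  (forall n m, Rintegral leb I01 (fun t => iota (e n) t * iota (e m) t)
                 = (n == m)%:R) /\
  (forall g, L2fun g ->
     (forall n, Rintegral leb I01 (fun t => g t * iota (e n) t) = 0) ->
     {ae leb, forall t, I01 t -> g t = 0}).

(** weakly uniformly dense (indices shifted: e 0, e 1, ... ) *)
Definition weakly_uniformly_dense (V0 : tvsType R) (iota : V0 -> R -> R)
    (e : nat -> V0) : Prop :=
  forall h, Linffun h ->
    (fun n : nat => Rintegral leb I01 (fun t =>
        h t * ((n%:R)^-1 * (\sum_(k < n) iota (e k) t ^+ 2) - 1)))
      @ \oo --> (0 : R).

Definition levy_mean d (V0 : tvsType R) N (f : Vsp d V0 -> MC N)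
    (e : nat -> V0) (x : Vsp d V0) (n : nat) : MC N :=
  (n%:R)^-1 *: \sum_(k < n) \sum_(mu < d)
      D2 f x (ptens mu (e k)) (ptens mu (e k)).

Definition levy_dom d (V0 : tvsType R) N (f : Vsp d V0 -> MC N)
    (e : nat -> V0) : Prop :=
  C2 f /\ forall x, cvg (levy_mean f e x @ \oo).

Definition levy_laplacian d (V0 : tvsType R) N (f : Vsp d V0 -> MC N)
    (e : nat -> V0) (x : Vsp d V0) : MC N :=
  lim (levy_mean f e x @ \oo).

End LevyDefs.

Notation MC R N := 'M[R]_(N + N, N).
Notation Vsp d V0 := ('I_d -> GRing.Lmodule.sort V0)%type.

(* Main.v *)
Require Import Defs.
From mathcomp Require Import ring lra.
From mathcomp Require Import measurable_realfun.
From HB Require Import structures.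
From mathcomp Require Import all_boot all_order all_algebra.
From mathcomp Require Import all_classical all_reals all_analysis.
Import Order.TTheory GRing.Theory Num.Theory.
Import numFieldNormedType.Exports.
Local Open Scope classical_set_scope.
Local Open Scope ring_scope.
Set Implicit Arguments.
Unset Strict Implicit.
Section S.
Variable R : realType.
Notation leb := (@lebesgue_measure R).
Notation I := (@I01 R).
Notation RI := (Rintegral leb I).

Lemma mI01 : measurable (@I01 R).
Proof.
have -> : @I01 R = `[0, 1]%classic.
  by apply/seteqP; split => t /=; rewrite /I01 /= in_itv.
exact: measurable_itv.
Qed.

Lemma mI01' : measurable (I : set (measurableTypeR R)).
Proof. exact: mI01. Qed.

Lemma lebI01 : leb (@I01 R) = 1%E.
Proof.
have -> : @I01 R = `[0, 1]%classic.
  by apply/seteqP; split => t /=; rewrite /I01 /= in_itv.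
rewrite lebesgue_measure_itv/= lte_fin ltr01 /=; congr (_%:E); lra.
Qed.

Lemma lebI01' : leb (I : set (measurableTypeR R)) = 1%E.
Proof. exact: lebI01. Qed.

Lemma Rint_nonint (f : R -> R) : measurable_fun I f ->
  ~ leb.-integrable I (EFin \o f) -> RI f = 0.
Proof.
move=> mf ni; rewrite /Rintegral.
have : ~ (\int[leb]_(x in I) (f x)%:E \is a fin_num)%E.
  rewrite -integral_fin_num_abs //; last exact: mI01.
  move=> h; apply: ni; apply/integrableP; split => //.
  exact/measurable_EFinP.
rewrite fin_numE => /negP; rewrite negb_and !negbK => /orP[] /eqP -> //.
Qed.

Lemma RintZ (f : R -> R) (r : R) : measurable_fun I f -> RI (fun t => r * f t) = r * RI f.
Proof.
move=> mf.
have [intf|nintf] := pselect (leb.-integrable I (EFin \o f)).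
  by rewrite RintegralZl //; exact: mI01.
have [->|r0] := eqVneq r 0.
  by rewrite mul0r; under eq_Rintegral do rewrite mul0r; rewrite Rintegral_cst ?mul0r //; exact: mI01.
have mrf : measurable_fun I (fun t => r * f t).
  exact: (measurable_funM (measurable_cst r) mf).
have nirf : ~ leb.-integrable I (EFin \o (fun t => r * f t)).
  move=> h; apply: nintf.
  have := integrableZl mI01' (r^-1) h.
  apply: eq_integrable; first exact: mI01.
  by move=> t _ /=; rewrite -EFinM mulrA mulVf // mul1r.
by rewrite (Rint_nonint mrf nirf) (Rint_nonint mf nintf) mulr0.
Qed.

Lemma absM_le (x y : R) : `|x * y| <= x ^+ 2 + y ^+ 2.
Proof.
rewrite normrM -(real_normK (num_real x)) -(real_normK (num_real y)).
have := normr_ge0 x; have := normr_ge0 y.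
set a := `|x|; set b := `|y| => b0 a0.
nra.
Qed.

Lemma sq_lin_le (a x y : R) : (a * x + y) ^+ 2 <= 2 * a ^+ 2 * x ^+ 2 + 2 * y ^+ 2.
Proof. have := sqr_ge0 (a * x - y); nra. Qed.

Lemma int_mul (f g : R -> R) : L2fun f -> L2fun g ->
  leb.-integrable I (EFin \o (fun t => f t * g t)).
Proof.
move=> [mf if2] [mg ig2].
apply: (le_integrable mI01' (g := (fun t => (f t ^+ 2)%:E) \+ (fun t => (g t ^+ 2)%:E))%E).
- by apply/measurable_EFinP; exact: (measurable_funM mf mg).
- move=> t _ /=; rewrite lee_fin.
  rewrite [X in _ <= X]ger0_norm ?addr_ge0 ?sqr_ge0 //; exact: absM_le.
- exact: (integrableD mI01' if2 ig2).
Qed.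

Lemma L2_lin (a : R) (f g : R -> R) : L2fun f -> L2fun g ->
  L2fun (fun t => a * f t + g t).
Proof.
move=> [mf if2] [mg ig2].
have mh : measurable_fun I (fun t => a * f t + g t).
  exact: (measurable_funD (measurable_funM (measurable_cst a) mf) mg).
split => //.
apply: (le_integrable mI01'
  (g := (fun t => (2 * a ^+ 2)%:E * (f t ^+ 2)%:E) \+ (fun t => 2%:E * (g t ^+ 2)%:E))%E).
- by apply/measurable_EFinP; exact: (measurable_funX _ mh).
- move=> t _ /=; rewrite lee_fin.
  have := sqr_ge0 (f t); have := sqr_ge0 (g t); have := sqr_ge0 a => h1 h2 h3.
  rewrite ger0_norm ?sqr_ge0 // ger0_norm; last nra.
  exact: sq_lin_le.
- by apply: (integrableD mI01'); apply: (integrableZl mI01').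
Qed.

Lemma L2_0 : L2fun (fun _ : R => 0).
Proof.
split; first exact: measurable_cst.
apply/integrableP; split; first exact: measurable_cst.
under eq_integral do rewrite expr0n /= normr0.
by rewrite integral0.
Qed.

Lemma L2_sum (T : Type) (s : seq T) (c : T -> R) (F : T -> R -> R) :
  (forall i, L2fun (F i)) -> L2fun (fun t => \sum_(i <- s) c i * F i t).
Proof.
move=> hF; elim: s => [|i s ih].
  by under eq_fun do rewrite big_nil; exact: L2_0.
under eq_fun do rewrite big_cons.
exact: L2_lin.
Qed.

Definition ip (f g : R -> R) := RI (fun t => f t * g t).

Lemma ipC f g : ip f g = ip g f.
Proof. by rewrite /ip; under eq_Rintegral do rewrite mulrC. Qed.

Lemma ip_lin (a : R) (f1 f2 h : R -> R) : L2fun f1 -> L2fun f2 -> L2fun h ->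
  ip (fun t => a * f1 t + f2 t) h = a * ip f1 h + ip f2 h.
Proof.
move=> h1 h2 hh; rewrite /ip.
under eq_Rintegral do rewrite mulrDl -mulrA.
rewrite RintegralD //; first 1 last.
- exact: mI01'.
- have := integrableZl mI01' a (int_mul h1 hh).
  by apply: eq_integrable; [exact: mI01'|move=> t _ /=; rewrite EFinM].
- exact: int_mul.
by rewrite RintegralZl //; [exact: mI01'|exact: int_mul].
Qed.

Lemma ip_sum (T : Type) (s : seq T) (c : T -> R) (F : T -> R -> R) h :
  (forall i, L2fun (F i)) -> L2fun h ->
  ip (fun t => \sum_(i <- s) c i * F i t) h = \sum_(i <- s) c i * ip (F i) h.
Proof.
move=> hF hh; elim: s => [|i s ih].
  rewrite big_nil /ip; under eq_Rintegral do rewrite big_nil mul0r.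
  by rewrite Rintegral_cst ?mul0r //; exact: mI01.
under eq_fun do rewrite big_cons.
by rewrite ip_lin //; [rewrite ih big_cons | exact: L2_sum].
Qed.

Lemma ip_ge0 f : 0 <= ip f f.
Proof. by apply: Rintegral_ge0 => t _; rewrite -expr2 sqr_ge0. Qed.

Lemma discr (A B C : R) : 0 <= A -> (forall l, 0 <= A * l ^+ 2 - 2 * B * l + C) ->
  B ^+ 2 <= A * C.
Proof.
move=> A0 hq; have [Ap|] := ltP 0 A.
  have := hq (B / A).
  have -> : A * (B / A) ^+ 2 - 2 * B * (B / A) + C = C - B ^+ 2 / A.
    by field; rewrite gt_eqF.
  rewrite subr_ge0 ler_pdivrMr // => h; nra.
move=> A0'; have A00 : A = 0 by apply/eqP; rewrite eq_le A0' A0.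
subst A.
have [->|B0] := eqVneq B 0; first by rewrite expr0n /= mul0r.
have := hq ((C + 1) / (2 * B)).
have -> : 0 * ((C + 1) / (2 * B)) ^+ 2 - 2 * B * ((C + 1) / (2 * B)) + C = -1.
  by field.
by move=> h; lra.
Qed.

Lemma CS f g : L2fun f -> L2fun g -> ip f g ^+ 2 <= ip f f * ip g g.
Proof.
move=> hf hg; rewrite mulrC; apply: discr; first exact: ip_ge0.
move=> l.
have hl : L2fun (fun t => (- l) * g t + f t) by exact: L2_lin.
have := ip_ge0 (fun t => (- l) * g t + f t).
rewrite (ip_lin (-l) hg hf hl) ipC (ip_lin (-l) hg hf hg).
rewrite (ipC f (fun t => - l * g t + f t)) (ip_lin (-l) hg hf hf) => h.
rewrite [ip g f]ipC in h.
suff -> : ip g g * l ^+ 2 - 2 * ip f g * l + ip f f =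
  - l * (- l * ip g g + ip f g) + (- l * ip f g + ip f f) by [].
ring.
Qed.

Lemma sum_delta n (c : nat -> R) (k : 'I_n) :
  \sum_(j < n) c j * (j == k :> nat)%:R = c k.
Proof.
rewrite (bigD1 k) //= eqxx mulr1 big1 ?addr0 // => j /negbTE jk.
by rewrite (_ : (j == k :> nat) = false) ?mulr0 //; apply: jk.
Qed.

Lemma bessel (g : R -> R) (e : nat -> R -> R) n : L2fun g ->
  (forall k, L2fun (e k)) -> (forall j k, ip (e j) (e k) = (j == k)%:R) ->
  \sum_(k < n) ip g (e k) ^+ 2 <= ip g g.
Proof.
move=> hg he hon.
pose c k := ip g (e k).
pose S := fun t => \sum_(k < n) c k * e k t.
have hS : L2fun S by exact: L2_sum.
have hX : L2fun (fun t => (-1) * S t + g t) by exact: L2_lin.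
have h0 (k : 'I_n) : ip (e k) (fun t => (-1) * S t + g t) = 0.
  rewrite ipC ip_lin // /S ip_sum //.
  under eq_bigr do rewrite hon.
  rewrite (sum_delta c k) /c ipC; ring.
have := ip_ge0 (fun t => (-1) * S t + g t).
rewrite ip_lin // {1}/S ip_sum //.
under eq_bigr do rewrite h0 mulr0.
rewrite big1 // mulr0 add0r ipC ip_lin // /S ip_sum //.
under eq_bigr do rewrite ipC.
rewrite -/(c _).
have -> : \sum_(i < n) c i * ip g (e i) = \sum_(k < n) ip g (e k) ^+ 2.
  by apply: eq_bigr => i _; rewrite /c expr2.
by rewrite mulN1r addrC subr_ge0.
Qed.

Lemma mII : measurable (I `*` I : set (R * R)).
Proof. exact: measurableX mI01 mI01. Qed.

Lemma restr_sec (T : Type) (F : R * R -> T) (z : T) s t : I s ->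
  (if (s, t) \in I `*` I then F (s, t) else z) = (if t \in I then F (s, t) else z).
Proof.
move=> Is; case: ifPn => [/set_mem [_ It]|]; first by rewrite mem_set.
rewrite notin_setE => h; case: ifPn => // /set_mem It; exfalso; exact: h.
Qed.

Lemma sec_meas (F : R * R -> \bar R) : measurable_fun (I `*` I) F ->
  (forall p, 0 <= F p)%E ->
  measurable_fun I (fun s => \int[leb]_(t in I) F (s, t))%E.
Proof.
move=> mF F0.
pose G := F \_ (I `*` I).
have mG : measurable_fun setT G by exact: (measurable_restrictT F mII).1 mF.
have G0 p : (0 <= G p)%E by rewrite /G /patch; case: ifP.
have := measurable_fun_fubini_tonelli_F (m2 := leb) G mG G0.
move/(measurable_funS measurableT (@subsetT _ I)).
apply: eq_measurable_fun => s /set_mem Is.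
rewrite /fubini_F [in RHS]integral_mkcond; apply: eq_integral => t _.
by rewrite /G /patch /= restr_sec.
Qed.

Lemma sec_meas_real (F : R * R -> R) : measurable_fun (I `*` I) F ->
  measurable_fun I (fun s => RI (fun t => F (s, t))).
Proof.
move=> mF.
have mEF : measurable_fun (I `*` I) (EFin \o F) by exact/measurable_EFinP.
have m1 := sec_meas (measurable_funepos mEF) (fun p => funepos_ge0 _ p).
have m2 := sec_meas (measurable_funeneg mEF) (fun p => funeneg_ge0 _ p).
have := emeasurable_funB m1 m2.
move/(measurableT_comp (fine_measurable measurableT)).
apply: eq_measurable_fun => s _ /=.
rewrite [RHS]/Rintegral [in RHS]integralE. congr (fine (_ - _)); apply: eq_integral => t _; by rewrite ?funeposE ?funenegE.
Qed.

Lemma tonelliI (F : R * R -> \bar R) : measurable_fun (I `*` I) F ->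
  (forall p, 0 <= F p)%E ->
  (\int[leb \x leb]_(p in I `*` I) F p =
   \int[leb]_(s in I) \int[leb]_(t in I) F (s, t))%E.
Proof.
move=> mF F0.
pose G := F \_ (I `*` I).
have mG : measurable_fun setT G by exact: (measurable_restrictT F mII).1 mF.
have G0 p : (0 <= G p)%E by rewrite /G /patch; case: ifP.
rewrite integral_mkcond (@fubini_tonelli1 _ _ (measurableTypeR R) (measurableTypeR R) R leb leb G mG G0) [RHS]integral_mkcond.
apply: eq_integral => s _; rewrite /fubini_F /patch.
case: ifPn => [/set_mem Is|Is].
  rewrite [RHS]integral_mkcond; apply: eq_integral => t _.
  by rewrite /G /patch /= restr_sec.
rewrite -[RHS](integral0 leb setT); apply: eq_integral => t _.
rewrite /G /patch; case: ifPn => // /set_mem [/= Is' _].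
by move: Is; rewrite notin_setE.
Qed.

Lemma Rint_sum (T : Type) (s : seq T) (F : T -> R -> R) :
  (forall i, leb.-integrable I (EFin \o F i)) ->
  leb.-integrable I (EFin \o (fun t => \sum_(i <- s) F i t)) /\
  RI (fun t => \sum_(i <- s) F i t) = \sum_(i <- s) RI (F i).
Proof.
move=> hF; elim: s => [|i s [ih1 ih2]].
  rewrite big_nil; under eq_fun do rewrite big_nil.
  split; first by have := L2_0; case=> _; apply: eq_integrable; [exact: mI01'|move=> t _ /=; rewrite expr0n].
  by rewrite Rintegral_cst ?mul0r //; exact: mI01.
under eq_fun do rewrite big_cons.
split.
  have := integrableD mI01' (hF i) ih1.
  by apply: eq_integrable; [exact: mI01'|move=> t _ /=; rewrite EFinD].
by rewrite RintegralD ?big_cons ?ih2 //; exact: mI01'.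
Qed.

Lemma sec_meas_K (K : R -> R -> R) s : measurable_fun (I `*` I) (fun p : R * R => K p.1 p.2) ->
  I s -> measurable_fun I (fun t => K s t).
Proof.
move=> mK Is.
have mp : measurable_fun I (pair s : R -> R * R).
  exact: (measurable_funS measurableT (@subsetT _ I) (pair1_measurable s)).
have := measurable_comp mII _ mK mp.
apply; by move=> _ [t It <-].
Qed.

Lemma meas_snd (g : R -> R) : measurable_fun I g ->
  measurable_fun (I `*` I) (fun p : R * R => g p.2).
Proof.
move=> mg.
have ms : measurable_fun (I `*` I) (snd : R * R -> R).
  exact: (measurable_funS measurableT (@subsetT _ (I `*` I)) measurable_snd).
have := measurable_comp mI01 _ mg ms.
apply; by move=> _ [[a b] [_ Ib] <-].
Qed.

Definition orth (e : nat -> R -> R) := forall j k, ip (e j) (e k) = (j == k)%:R.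

Lemma K_bessel (K : R -> R -> R) (e : nat -> R -> R) n s :
  measurable_fun (I `*` I) (fun p : R * R => K p.1 p.2) ->
  (forall k, L2fun (e k)) -> orth e -> I s ->
  ((\sum_(k < n) RI (fun t => K s t * e k t) ^+ 2)%:E <=
     \int[leb]_(t in I) (K s t ^+ 2)%:E)%E.
Proof.
move=> mK he ho Is.
have Q0 : (0 <= \int[leb]_(t in I) (K s t ^+ 2)%:E)%E.
  by apply: integral_ge0 => t _; rewrite lee_fin sqr_ge0.
have [->|Qoo] := eqVneq (\int[leb]_(t in I) (K s t ^+ 2)%:E)%E +oo%E.
  exact: leey.
have mKs := sec_meas_K mK Is.
have hKs : L2fun (fun t => K s t).
  split => //; apply/integrableP; split.
    by apply/measurable_EFinP; exact: measurable_funX.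
  under eq_integral do rewrite abse_EFin ger0_norm ?sqr_ge0 //.
  by rewrite ltey.
have := bessel n hKs he ho.
rewrite /ip -lee_fin => h; apply: (le_trans h).
rewrite /Rintegral fineK; last by rewrite ge0_fin_numE // ltey.
by under eq_integral do rewrite -expr2.
Qed.

Lemma sum_sqB (a : nat -> R) (l : R) n :
  \sum_(k < n) (a k - l) ^+ 2 =
  n%:R * l ^+ 2 - 2 * (\sum_(k < n) a k) * l + \sum_(k < n) a k ^+ 2.
Proof.
elim: n => [|n IH]; first by rewrite !big_ord0 mul0r; ring.
by rewrite !big_ord_recr /= IH -natr1; ring.
Qed.

Lemma cesaro_sq (a : nat -> R) C : (forall n, \sum_(k < n) a k ^+ 2 <= C) ->
  (fun n => n%:R^-1 * \sum_(k < n) a k) @ \oo --> (0 : R).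
Proof.
move=> hC.
have C0 : 0 <= C by have := hC 0%N; rewrite big_ord0.
have cs n : (\sum_(k < n) a k) ^+ 2 <= n%:R * \sum_(k < n) a k ^+ 2.
  apply: discr => [|l]; first exact: ler0n.
  rewrite -sum_sqB; apply: sumr_ge0 => k _; exact: sqr_ge0.
apply/cvgrPdist_lt => eps e0.
pose N := Num.Def.archi_bound (C / eps ^+ 2).
have hN : C / eps ^+ 2 < N%:R by apply: archi_boundP; apply: divr_ge0 => //; exact: sqr_ge0.
near=> n.
have nN : (N < n)%N by near: n; exact: nbhs_infty_gt.
rewrite sub0r normrN.
have n0 : 0 < n%:R :> R by rewrite ltr0n; apply: leq_ltn_trans nN.
have Nn : N%:R < n%:R :> R by rewrite ltr_nat.
set S := \sum_(k < n) a k.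
have h1 : S ^+ 2 <= n%:R * C.
  apply: (le_trans (cs n)); rewrite ler_pM2l //.
have e2 : 0 < eps ^+ 2 by exact: exprn_gt0.
have h2 : C < n%:R * eps ^+ 2.
  by rewrite -ltr_pdivrMr //; apply: (lt_trans hN).
have h3 : S ^+ 2 < (n%:R * eps) ^+ 2.
  apply: (le_lt_trans h1); rewrite exprMn. nra.

rewrite normrM ger0_norm ?invr_ge0 ?ltW // ltr_pdivrMl //.
rewrite -(ltr_pXn2r (n := 2)) //; last by apply: mulr_ge0 => //; exact: ltW.
by rewrite real_normK ?num_real.
Unshelve. all: by end_near.
Qed.

Lemma K_cesaro (K : R -> R -> R) (e : nat -> R -> R) :
  L2fun2 K -> (forall k, L2fun (e k)) -> orth e ->
  (fun n => n%:R^-1 * \sum_(k < n)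
     RI (fun s => RI (fun t => (e k t * e k s) * K s t))) @ \oo --> (0 : R).
Proof.
move=> [mK iK2] he ho.
pose Q s := (\int[leb]_(t in I) (K s t ^+ 2)%:E)%E.
have mK2 : measurable_fun (I `*` I) (fun p : R * R => (K p.1 p.2 ^+ 2)%:E).
  by apply/measurable_EFinP; exact: measurable_funX.
have K20 p : (0 <= (K p.1 p.2 ^+ 2)%:E)%E by rewrite lee_fin sqr_ge0.
have mQ : measurable_fun I Q := sec_meas mK2 K20.
have Q0 s : (0 <= Q s)%E by apply: integral_ge0 => t _; rewrite lee_fin sqr_ge0.
have hQ : (\int[leb]_(s in I) Q s < +oo)%E.
  rewrite /Q -(tonelliI mK2 K20).
  case/integrableP: iK2 => _; apply: le_lt_trans.
  by apply: ge0_le_integral => //; [exact: mII| exact: measurableT_comp mK2 |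
    move=> p _; rewrite gee0_abs].
have iQ : leb.-integrable I Q.
  apply/integrableP; split => //.
  by under eq_integral do rewrite gee0_abs //.
pose c k s := RI (fun t => K s t * e k t).
have mc k : measurable_fun I (c k).
  apply: (sec_meas_real (F := fun p : R * R => K p.1 p.2 * e k p.2)).
  exact: (measurable_funM mK (meas_snd (he k).1)).
have cQ k s : I s -> ((c k s ^+ 2)%:E <= Q s)%E.
  move=> Is; apply: le_trans (K_bessel k.+1 mK he ho Is).
  rewrite lee_fin big_ord_recr /= lerDr.
  by apply: sumr_ge0 => j _; exact: sqr_ge0.
have hc k : L2fun (c k).
  split => //.
  apply: (le_integrable mI01' _ _ iQ).
    by apply/measurable_EFinP; exact: (measurable_funX _ (mc k)).
  move=> s Is; rewrite gee0_abs ?lee_fin ?sqr_ge0 // gee0_abs //.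
  exact: cQ.
pose C := fine (\int[leb]_(s in I) Q s)%E.
have hsum n : \sum_(k < n) ip (c k) (c k) <= C.
  have [i1 i2] := Rint_sum (index_enum 'I_n) (F := fun k s => c k s * c k s)
     (fun k => int_mul (hc k) (hc k)).
  rewrite /ip -i2 /C /Rintegral fine_le //.
  - by have := integrable_fin_num mI01' i1.
  - by rewrite ge0_fin_numE //; apply: integral_ge0.
  apply: ge0_le_integral => //.
  - exact: mI01'.
  - move=> s _; rewrite lee_fin; apply: sumr_ge0 => k _; rewrite -expr2; exact: sqr_ge0.
  - exact: measurable_int i1.
  move=> s Is; under eq_bigr do rewrite -expr2.
  exact: (K_bessel n mK he ho Is).
apply: (cesaro_sq (a := fun k => RI (fun s => RI (fun t => (e k t * e k s) * K s t))) (C := C)) => n.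
have -> : \sum_(k < n) RI (fun s => RI (fun t => (e k t * e k s) * K s t)) ^+ 2 =
          \sum_(k < n) ip (e k) (c k) ^+ 2.
  apply: eq_bigr => k _; congr (_ ^+ 2); apply: eq_Rintegral => s /set_mem Is.
  have mt : measurable_fun I (fun t => K s t * e k t).
    exact: (measurable_funM (sec_meas_K mK Is) (he k).1).
  rewrite -(RintZ (e k s) mt); apply: eq_Rintegral => t _; ring.
apply: le_trans (hsum n); apply: ler_sum => k _.
apply: (le_trans (CS (he k) (hc k))).
by rewrite ho eqxx mul1r.
Qed.

Lemma Linf_int (h : R -> R) : Linffun h -> leb.-integrable I (EFin \o h).
Proof.
move=> [mh [M hM]].
apply/integrableP; split; first exact/measurable_EFinP.
apply: (@le_lt_trans _ _ (\int[leb]_(x in I) (`|M|%:E))%E).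
  apply: (ae_ge0_le_integral mI01').
  - by [].
  - by apply: measurableT_comp => //; exact/measurable_EFinP.
  - by move=> t _; rewrite lee_fin.
  - exact: measurable_cst.
  case: hM => N [mN N0 hN]; exists N; split => // t /= nt; apply: hN => /= ht.
  apply: nt => It; rewrite lee_fin.
  exact: (le_trans (ht It) (ler_norm M)).
rewrite (integral_cst leb mI01').
suff : (`|M|%:E * 1 < +oo)%E by rewrite -{1}lebI01' => hh; exact: hh.
by rewrite mule1 ltry.
Qed.

Lemma Linf_int2 (h g : R -> R) : Linffun h -> L2fun g ->
  leb.-integrable I (EFin \o (fun t => g t * g t * h t)).
Proof.
move=> [mh [M hM]] [mg ig].
apply/integrableP; split.
  apply/measurable_EFinP.
  exact: (measurable_funM (measurable_funM mg mg) mh).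
apply: (@le_lt_trans _ _ (\int[leb]_(x in I) (`|M|%:E * (g x ^+ 2)%:E))%E).
  apply: (ae_ge0_le_integral mI01').
  - by [].
  - apply: measurableT_comp => //; apply/measurable_EFinP.
    exact: (measurable_funM (measurable_funM mg mg) mh).
  - by move=> t _; rewrite -EFinM lee_fin; apply: mulr_ge0 => //; exact: sqr_ge0.
  - apply: emeasurable_funM; first exact: measurable_cst.
    by apply/measurable_EFinP; exact: (measurable_funX _ mg).
  case: hM => N [mN N0 hN]; exists N; split => // t /= nt; apply: hN => /= ht.
  apply: nt => It; rewrite -EFinM lee_fin.
  rewrite normrM -expr2 ger0_norm ?sqr_ge0 // mulrC.
  apply: ler_wpM2r; first exact: sqr_ge0.
  exact: (le_trans (ht It) (ler_norm M)).
rewrite (integralZl mI01' ig) lte_mul_pinfty //.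
have : (\int[leb]_(x in I) (g x ^+ 2)%:E \is a fin_num)%E.
  by have := integrable_fin_num mI01' ig.
by rewrite fin_numE => /andP[_]; rewrite ltey.
Qed.

Lemma L_cesaro (h : R -> R) (e : nat -> R -> R) : Linffun h ->
  (forall k, L2fun (e k)) ->
  (fun n : nat => RI (fun t =>
        h t * ((n%:R)^-1 * (\sum_(k < n) e k t ^+ 2) - 1))) @ \oo --> (0 : R) ->
  (fun n => n%:R^-1 * \sum_(k < n) RI (fun t => (e k t * e k t) * h t))
     @ \oo --> RI h.
Proof.
move=> hh he hw.
have ih := Linf_int hh.
have E n : n%:R^-1 * \sum_(k < n) RI (fun t => (e k t * e k t) * h t) =
    RI (fun t => h t * ((n%:R)^-1 * (\sum_(k < n) e k t ^+ 2) - 1)) + RI h.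
  have [i1 i2] := Rint_sum (index_enum 'I_n) (F := fun k t => e k t * e k t * h t)
     (fun k => Linf_int2 hh (he k)).
  have -> : RI (fun t => h t * ((n%:R)^-1 * (\sum_(k < n) e k t ^+ 2) - 1)) =
     RI (fun t => n%:R^-1 * (\sum_(k < n) e k t * e k t * h t) - h t).
    apply: eq_Rintegral => t _.
    rewrite mulrBr mulr1 mulrCA mulr_sumr; congr (_ * _ - _).
    by apply: eq_bigr => k _; rewrite expr2 mulrC.
  rewrite RintegralB; first last.
  - exact: ih.
  - have := integrableZl mI01' (n%:R^-1) i1.
    by apply: eq_integrable; [exact: mI01'|move=> t _ /=; rewrite EFinM].
  - exact: mI01'.
  rewrite RintZ; last by apply/measurable_EFinP; exact: measurable_int i1.
  by rewrite i2 subrK.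
rewrite (_ : (fun n => _) = fun n =>
    RI (fun t => h t * ((n%:R)^-1 * (\sum_(k < n) e k t ^+ 2) - 1)) + RI h).
  by rewrite -[X in _ --> X]add0r; apply: cvgD => //; exact: cvg_cst.
by apply/funext => n; rewrite E.
Qed.

Lemma MCintE N (F : R -> MC R N) i j : MCint F i j = RI (fun t => F t i j).
Proof.
rewrite /MCint -(splitK i); case: (fintype.split i) => k /=.
  by rewrite col_mxEu mxE; apply: eq_Rintegral => t _; rewrite /reE mxE.
by rewrite col_mxEd mxE; apply: eq_Rintegral => t _; rewrite /imE mxE.
Qed.

Lemma L2MC2E N (K : R -> R -> MC R N) : L2MC2 K -> forall i j, L2fun2 (fun s t => K s t i j).
Proof.
move=> hK i j; rewrite -(splitK i); case: (fintype.split i) => k /=; have [h1 h2] := hK k j.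
  by move: h1; rewrite /reE; under [fun s t => _]eq_fun do under eq_fun do rewrite mxE.
by move: h2; rewrite /imE; under [fun s t => _]eq_fun do under eq_fun do rewrite mxE.
Qed.

Lemma LinfMCE N (K : R -> MC R N) : LinfMC K -> forall i j, Linffun (fun t => K t i j).
Proof.
move=> hK i j; rewrite -(splitK i); case: (fintype.split i) => k /=; have [h1 h2] := hK k j.
  by move: h1; rewrite /reE; under [fun t => _]eq_fun do rewrite mxE.
by move: h2; rewrite /imE; under [fun t => _]eq_fun do rewrite mxE.
Qed.

Lemma cvg_mx_entry m n (u : nat -> 'M[R]_(m, n)) (L : 'M[R]_(m, n)) :
  (forall i j, (fun k => u k i j) @ \oo --> L i j) -> u @ \oo --> L.
Proof.
move=> hu; apply/cvgrPdist_le => /= eps e0.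
near=> k.
rewrite /Num.Def.normr/= mx_normrE (bigmax_le _ (ltW e0))//= => ij _.
rewrite !mxE/=.
move: ij; near: k; apply: filter_forall => /= ij.
exact: ((cvgrPdist_le _ _).1 (hu ij.1 ij.2)).
Unshelve. all: by end_near.
Qed.
End S.

Unset Implicit Arguments.
Set Strict Implicit.

Theorem proposition2 (R : realType) (d N : nat) (V0 : tvsType R)
    (iota : V0 -> R -> R) (V00 : set V0) (f : Vsp d V0 -> MC R N)
    (KV : Vsp d V0 -> 'I_d -> R -> R -> MC R N)
    (KL : Vsp d V0 -> 'I_d -> R -> MC R N) (e : nat -> V0) :
  L2_embedding iota ->
  linear_subspace V00 ->
  C2 f ->
  (forall (x : Vsp d V0) (mu : 'I_d),
     [/\ L2MC2 (KV x mu), LinfMC (KL x mu) &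
      forall u v : Vsp d V0, V0mu V00 mu u -> V0mu V00 mu v ->
        D2 f x u v =
          MCint2 (fun s t => (iota (u mu) t * iota (v mu) s) *: KV x mu s t)
          + MCint (fun t => (iota (u mu) t * iota (v mu) t) *: KL x mu t)]) ->
  ONB_L2 iota e ->
  weakly_uniformly_dense iota e ->
  (forall n, V00 (e n)) ->
  levy_dom f e /\
  forall x : Vsp d V0, levy_laplacian f e x = \sum_(mu < d) MCint (KL x mu).
Proof.
move=> hemb hsub hC2 hK hON hWUD hV.
case: hemb => _ hL2 _ _ _.
pose E k := iota (e k).
have he : forall k, L2fun (E k) := fun k => hL2 (e k).
have ho : orth E := hON.1.
have hconv x : levy_mean f e x @ \oo --> \sum_(mu < d) MCint (KL x mu).
  apply: cvg_mx_entry => i j.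
  pose aK k mu := Rintegral (@lebesgue_measure R) (@I01 R)
     (fun s => Rintegral (@lebesgue_measure R) (@I01 R) (fun t => (E k t * E k s) * KV x mu s t i j)).
  pose bL k mu := Rintegral (@lebesgue_measure R) (@I01 R) (fun t => (E k t * E k t) * KL x mu t i j).
  have entry n : levy_mean f e x n i j = \sum_(mu < d)
      (n%:R^-1 * \sum_(k < n) aK k mu + n%:R^-1 * \sum_(k < n) bL k mu).
    rewrite /levy_mean mxE summxE.
    under eq_bigr do rewrite summxE.
    rewrite exchange_big mulr_sumr; apply: eq_bigr => mu _.
    rewrite -mulrDr -big_split; congr (_ * _); apply: eq_bigr => k _.
    have [_ _ hD] := hK x mu.
    have Vk : V0mu V00 mu (ptens mu (e k)).
      by split; [rewrite /ptens eqxx; exact: hV | move=> nu /negbTE hn; rewrite /ptens hn].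
    rewrite hD // /ptens eqxx mxE /MCint2 !MCintE.
    congr (_ + _); apply: eq_Rintegral => s _; rewrite ?MCintE.
      by apply: eq_Rintegral => t _; rewrite mxE.
    by rewrite mxE.
  under eq_fun do rewrite entry.
  have -> : (\sum_(mu < d) MCint (KL x mu)) i j = \sum_(mu < d)
      (0 + Rintegral (@lebesgue_measure R) (@I01 R) (fun t => KL x mu t i j)).
    by rewrite summxE; apply: eq_bigr => mu _; rewrite MCintE add0r.
  apply: cvg_big => //; first exact: add_continuous.
  move=> mu _; apply: cvgD.
    apply: (K_cesaro (K := fun s t => KV x mu s t i j)) => //.
    by have [h1 _ _] := hK x mu; exact: L2MC2E.
  have hh : Linffun (fun t => KL x mu t i j).
    by have [_ h2 _] := hK x mu; exact: LinfMCE.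
  exact: (L_cesaro hh he (hWUD _ hh)).
split.
  by split => // x; apply/cvg_ex; exists (\sum_(mu < d) MCint (KL x mu)); exact: hconv.
by move=> x; rewrite /levy_laplacian; exact: cvg_lim (hconv x).
Qed.
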